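(* Let $T$ be a complete discrete valuation ring with fraction field $K$ and uniformizer $t$. Let $\widehat R_0$ be a ring containing $T$ which is a complete discrete valuation ring with uniformizer $t$, with fraction field $F_0$; fix a real $\alpha>1$ and equip $F_0$ with the absolute value $|t^n u| = \alpha^{-n}$ ($n \in \mathbb Z$, $u \in \widehat R_0^\times$). Let $F_1, F_2$ be subfields of $F_0$ containing $T$, and let $V \subset F_1 \cap \widehat R_0$ and $W \subset F_2 \cap \widehat R_0$ be $t$-adically complete $T$-submodules such that (I) $V + W = \widehat R_0$ and (II) $V \cap t\widehat R_0 = tV$ and $W \cap t\widehat R_0 = tW$. Equip $V[1/t] \subset F_0$ with the induced metric. Then: (1) $V$ is closed in $\widehat R_0$; (2) for $v \in V[1/t]\setminus\{0\}$, $|v| = \inf\{\alpha^n : n \in \mathbb Z,\ t^n v \in V\}$; (3) $V = \{ v \in V[1/t] : |v| \le 1\}$, and $V$ is an open and closed submodule of $V[1/t]$; (4) $V[1/t]$ is closed in $F_0$ and is a Banach $K$-space.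
   Context: $t$-adically complete means that the natural map $V \to \varprojlim_m V/t^{m+1}V$ is an isomorphism. *)

(* Defs.v *)
From HB Require Import structures.
From mathcomp Require Import all_boot all_order all_algebra.
From mathcomp Require Import classical_sets reals.
Set Implicit Arguments. Unset Strict Implicit. Unset Printing Implicit Defensive.
Import Order.TTheory GRing.Theory Num.Theory.
Local Open Scope ring_scope.

(* All rings/modules are modelled as subsets of one ambient field F
   (the fraction field F_0 of \hat R_0). *)
Section Defs.
Variable F : fieldType.

Definition subring (S : set F) : Prop :=
  [/\ S 1, (forall x y, S x -> S y -> S (x - y)) &
      (forall x y, S x -> S y -> S (x * y))].

Definition subfield (S : set F) : Prop :=
  subring S /\ (forall x, S x -> S x^-1).

Definition unit_in (S : set F) (u : F) : Prop := [/\ S u, u != 0 & S u^-1].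

Definition dvr_unif (S : set F) (t : F) : Prop :=
  [/\ subring S, S t, t != 0, ~ S t^-1 &
      (forall x, S x -> x != 0 -> exists n : nat, exists u, unit_in S u /\ x = t ^+ n * u)].

Definition tpowM (t : F) (k : nat) (M : set F) : set F :=
  [set x | exists y, M y /\ x = t ^+ k * y].

(* M (an additive subgroup of F) is t-adically complete: the natural map
   M -> lim_m M / t^(m+1) M is an isomorphism, i.e. injective (separated)
   and surjective (every compatible system of residues lifts). *)
Definition tadic_complete (t : F) (M : set F) : Prop :=
  (forall x, M x -> (forall m : nat, tpowM t m.+1 M x) -> x = 0) /\
  (forall xs : nat -> F, (forall m, M (xs m)) ->
     (forall m, tpowM t m.+1 M (xs m.+1 - xs m)) ->
     exists x, M x /\ forall m, tpowM t m.+1 M (x - xs m)).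

Definition cdvr_unif (S : set F) (t : F) : Prop :=
  dvr_unif S t /\ tadic_complete t S.

Definition frac_of (S : set F) : set F :=
  [set x | exists a b, [/\ S a, S b, b != 0 & x = a / b]].

Definition submodule (T M : set F) : Prop :=
  [/\ M 0, (forall x y, M x -> M y -> M (x + y)) &
      (forall c x, T c -> M x -> M (c * x))].

Definition inv_t (t : F) (V : set F) : set F :=
  [set x | exists n : nat, V (t ^+ n * x)].

Variable R : realType.
Variable abs : F -> R.

Definition closed_in (A B : set F) : Prop :=
  forall x, A x -> (forall e : R, 0 < e -> exists y, B y /\ abs (x - y) < e) -> B x.

Definition open_in (A B : set F) : Prop :=
  forall x, B x -> exists2 e : R, 0 < e & forall y, A y -> abs (y - x) < e -> B y.

Definition cauchy_seq (u : nat -> F) : Prop :=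
  forall e : R, 0 < e -> exists N, forall m n, (N <= m)%N -> (N <= n)%N ->
    abs (u m - u n) < e.

Definition converges_to (u : nat -> F) (l : F) : Prop :=
  forall e : R, 0 < e -> exists N, forall n, (N <= n)%N -> abs (u n - l) < e.

Definition banach_space (K E : set F) : Prop :=
  [/\ submodule K E,
      (forall x, E x -> 0 <= abs x /\ (abs x = 0 -> x = 0)),
      (forall x y, E x -> E y -> abs (x + y) <= abs x + abs y),
      (forall c x, K c -> E x -> abs (c * x) = abs c * abs x) &
      (forall u : nat -> F, (forall n, E (u n)) -> cauchy_seq u ->
         exists2 l, E l & converges_to u l)].

End Defs.

(* Main.v *)
Require Import Defs.
From HB Require Import structures.
From mathcomp Require Import all_boot all_order all_algebra.
From mathcomp Require Import classical_sets reals boolp.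
From mathcomp Require Import ring lra zify.
Import Order.TTheory GRing.Theory Num.Theory.
Local Open Scope ring_scope.
Local Open Scope classical_set_scope.
Set Implicit Arguments. Unset Strict Implicit. Unset Printing Implicit Defensive.
Lemma sr0 (F : fieldType) (S : set F) : subring S -> S 0.
Proof. by case=> h1 hB _; rewrite -(subrr 1); apply: hB. Qed.

Lemma srN (F : fieldType) (S : set F) x : subring S -> S x -> S (- x).
Proof. move=> sS Sx; rewrite -sub0r; case: (sS) => _ hB _; exact: hB (sr0 sS) Sx. Qed.

Lemma srD (F : fieldType) (S : set F) x y : subring S -> S x -> S y -> S (x + y).
Proof. move=> sS Sx Sy; rewrite -(opprK y); case: (sS) => _ hB _; exact: hB Sx (srN sS Sy). Qed.

Lemma srB (F : fieldType) (S : set F) x y : subring S -> S x -> S y -> S (x - y).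
Proof. by move=> [_ hB _]; apply: hB. Qed.

Lemma srM (F : fieldType) (S : set F) x y : subring S -> S x -> S y -> S (x * y).
Proof. by move=> [_ _ hM]; apply: hM. Qed.

Lemma sr1 (F : fieldType) (S : set F) : subring S -> S 1.
Proof. by case. Qed.

Lemma srX (F : fieldType) (S : set F) x k : subring S -> S x -> S (x ^+ k).
Proof.
move=> sS Sx; elim: k => [|k IH]; first by rewrite expr0; exact: sr1.
by rewrite exprS; apply: srM.
Qed.

Lemma unitM (F : fieldType) (S : set F) u w : subring S -> unit_in S u -> unit_in S w ->
  unit_in S (u * w).
Proof.
move=> sS [Su u0 Sui] [Sw w0 Swi]; split; first exact: srM.
  by rewrite mulf_neq0.
by rewrite invfM; apply: srM.
Qed.

Lemma unitV (F : fieldType) (S : set F) u : unit_in S u -> unit_in S u^-1.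
Proof. by move=> [Su u0 Sui]; split; rewrite ?invr_eq0 ?invrK. Qed.

Lemma unit1 (F : fieldType) (S : set F) : subring S -> unit_in S 1.
Proof. by move=> sS; have h := sr1 sS; split; rewrite ?oner_neq0 ?invr1. Qed.

Lemma unitN1 (F : fieldType) (S : set F) : subring S -> unit_in S (-1).
Proof.
move=> sS; have h := srN sS (sr1 sS).
by split; rewrite ?oppr_eq0 ?oner_neq0 ?invrN ?invr1.
Qed.

Lemma rep (F : fieldType) (R0 : set F) t : dvr_unif R0 t -> (forall x, frac_of R0 x) ->
  forall x, x != 0 -> exists n : int, exists u, unit_in R0 u /\ x = t ^ n * u.
Proof.
move=> [sR Rt t0 _ Hd] Hfr x x0.
have [a [b [Ra Rb b0 xE]]] := Hfr x.
have a0 : a != 0 by apply: contraNneq x0 => a0; rewrite xE a0 mul0r.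
have [i [u [Uu aE]]] := Hd a Ra a0.
have [j [w [Uw bE]]] := Hd b Rb b0.
exists (i%:Z - j%:Z), (u / w); split; first by apply: unitM => //; exact: unitV.
rewrite xE aE bE expfzDr // -exprnN /=.
case: Uw => _ w0 _.
rewrite invfM; change (t ^ (i%:Z)) with (t ^+ i); ring.
Qed.

Definition absP (F : fieldType) (R : realType) (R0 : set F) t (alpha : R) (abs : F -> R) :=
  [/\ dvr_unif R0 t, (forall x, frac_of R0 x), 1 < alpha, abs 0 = 0 &
     forall (n : int) u, unit_in R0 u -> abs (t ^ n * u) = alpha ^ (- n)].


Lemma abs_tz (F : fieldType) (R : realType) (R0 : set F) t (alpha : R) abs :
  absP R0 t alpha abs -> forall n : int, abs (t ^ n) = alpha ^ (- n).
Proof.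
move=> [[sR _ _ _ _] _ _ _ H] n; rewrite -[t ^ n]mulr1; apply: H; exact: unit1.
Qed.

Lemma abs_pos (F : fieldType) (R : realType) (R0 : set F) t (alpha : R) abs :
  absP R0 t alpha abs -> forall x, x != 0 -> 0 < abs x.
Proof.
move=> [dv fr a1 _ H] x x0; have [n [u [Uu ->]]] := rep dv fr x0.
rewrite H //; apply: exprz_gt0; lra.
Qed.

Lemma abs_ge0 (F : fieldType) (R : realType) (R0 : set F) t (alpha : R) abs :
  absP R0 t alpha abs -> forall x, 0 <= abs x.
Proof.
move=> h x; have [->|x0] := eqVneq x 0; first by case: h => _ _ _ -> _.
exact/ltW/(abs_pos h).
Qed.

Lemma absM (F : fieldType) (R : realType) (R0 : set F) t (alpha : R) abs :
  absP R0 t alpha abs -> forall x y, abs (x * y) = abs x * abs y.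
Proof.
move=> h x y; case: (h) => dv fr a1 a0 H.
have [->|x0] := eqVneq x 0; first by rewrite mul0r a0 mul0r.
have [->|y0] := eqVneq y 0; first by rewrite mulr0 a0 mulr0.
have [n [u [Uu ->]]] := rep dv fr x0.
have [m [w [Uw ->]]] := rep dv fr y0.
case: (dv) => sR _ t0 _ _.
have -> : t ^ n * u * (t ^ m * w) = t ^ (n + m) * (u * w).
  by rewrite expfzDr //; ring.
rewrite !H //; last exact: unitM.
rewrite -expfzDr ?opprD //; lra.
Qed.

Lemma abs_le1 (F : fieldType) (R : realType) (R0 : set F) t (alpha : R) abs :
  absP R0 t alpha abs -> forall x, R0 x <-> abs x <= 1.
Proof.
move=> h x; case: (h) => dv fr a1 a0 H; case: (dv) => sR Rt t0 _ Hd.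
have [->|x0] := eqVneq x 0; first by rewrite a0 ler01; split => // _; exact: sr0.
split.
  move=> Rx; have [k [u [Uu ->]]] := Hd x Rx x0.
  rewrite -[t ^+ k]/(t ^ (k%:Z)) H // -(expr0z alpha) ler_eXz2l //; lia.
have [n [u [Uu ->]]] := rep dv fr x0.
rewrite H // -(expr0z alpha) ler_eXz2l // => hn.
have [k ->] : exists k : nat, n = k%:Z by exists `|n|%N; lia.
apply: srM => //; first exact: srX.
by case: Uu.
Qed.

Lemma absN (F : fieldType) (R : realType) (R0 : set F) t (alpha : R) abs :
  absP R0 t alpha abs -> forall x, abs (- x) = abs x.
Proof.
move=> h x; rewrite -mulN1r (absM h).
case: (h) => [[sR _ _ _ _] _ _ _ H].
by rewrite -[-1]mul1r -(expr0z t) H ?expr0z ?mul1r //; exact: unitN1.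
Qed.

Lemma abs_ultra0 (F : fieldType) (R : realType) (R0 : set F) t (alpha : R) abs :
  absP R0 t alpha abs -> forall x y, abs y <= abs x -> abs (x + y) <= abs x.
Proof.
move=> h x y hyx; case: (h) => [[sR _ _ _ _] _ _ a0 _].
have [x0|x0] := eqVneq x 0.
  by move: hyx; rewrite x0 add0r a0.
have xpos := abs_pos h x0.
have e : x + y = x * (1 + y / x) by field.
have hy : abs (y / x) <= 1.
  have : abs y = abs (y / x) * abs x by rewrite -(absM h) divfK.
  move=> ey; rewrite ey in hyx.
  by rewrite -(ler_pM2r xpos) mul1r.
rewrite e (absM h) ler_piMr ?(abs_ge0 h) //.
apply/(abs_le1 h); apply: (srD sR (sr1 sR)); exact/(abs_le1 h).
Qed.

Lemma abs_ultra (F : fieldType) (R : realType) (R0 : set F) t (alpha : R) abs :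
  absP R0 t alpha abs -> forall x y c, abs x <= c -> abs y <= c -> abs (x + y) <= c.
Proof.
move=> h x y c hx hy; have [hl|hl] := leP (abs y) (abs x).
  exact: le_trans (abs_ultra0 h hl) hx.
rewrite addrC; exact: le_trans (abs_ultra0 h (ltW hl)) hy.
Qed.

Lemma abs_ultra_lt (F : fieldType) (R : realType) (R0 : set F) t (alpha : R) abs :
  absP R0 t alpha abs -> forall x y c, abs x < c -> abs y < c -> abs (x + y) < c.
Proof.
move=> h x y c hx hy; have [hl|hl] := leP (abs y) (abs x).
  exact: le_lt_trans (abs_ultra0 h hl) hx.
rewrite addrC; exact: le_lt_trans (abs_ultra0 h (ltW hl)) hy.
Qed.

Lemma abs_disc (F : fieldType) (R : realType) (R0 : set F) t (alpha : R) abs :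
  absP R0 t alpha abs -> forall x (m : int), abs x < alpha ^ (- m) ->
  abs x <= alpha ^ (- (m + 1)).
Proof.
move=> h x m; case: (h) => dv fr a1 a0 H.
have [->|x0] := eqVneq x 0.
  by rewrite a0 => _; apply: exprz_ge0; lra.
have [n [u [Uu ->]]] := rep dv fr x0.
by rewrite H // ltr_eXz2l // ler_eXz2l //; lia.
Qed.

Lemma tpow_abs (F : fieldType) (R : realType) (R0 : set F) t (alpha : R) abs :
  absP R0 t alpha abs -> forall (k : nat) z,
  tpowM t k R0 z <-> abs z <= alpha ^ (- k%:Z).
Proof.
move=> h k z; case: (h) => dv fr a1 a0 H; case: (dv) => sR Rt t0 _ _.
have tk : abs (t ^+ k) = alpha ^ (- k%:Z) by rewrite -(abs_tz h).
have tkp : 0 < alpha ^ (- k%:Z) by apply: exprz_gt0; lra.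
split.
  case=> y [Ry ->]; rewrite (absM h) tk ler_piMr ?(abs_ge0 h) //; first exact: ltW.
  exact/(abs_le1 h).
move=> hz; exists (z / t ^+ k); split; last first.
  by rewrite mulrC divfK // expf_neq0.
apply/(abs_le1 h).
have : abs z = abs (t ^+ k) * abs (z / t ^+ k) by rewrite -(absM h) mulrC divfK // expf_neq0.
move=> ez; rewrite ez tk in hz.
by rewrite -(ler_pM2l tkp) mulr1.
Qed.

Definition VP (F : fieldType) (T R0 V : set F) t :=
  [/\ subring T, T t, submodule T V, V `<=` R0 &
     (tadic_complete t V /\
     forall x, (V x /\ exists r, R0 r /\ x = t * r) <-> exists v, V v /\ x = t * v)].

Lemma Ddiv (F : fieldType) (R : realType) (T R0 V : set F) t (alpha : R) abs :
  absP R0 t alpha abs -> VP T R0 V t ->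
  forall k w, R0 w -> V (t ^+ k * w) -> V w.
Proof.
move=> [[sR Rt t0 _ _] _ _ _ _] [_ _ _ _ [_ hII]].
elim=> [|k IH] w Rw; first by rewrite expr0 mul1r.
move=> hV; apply: IH => //.
have [v [Vv e]] : exists v, V v /\ t ^+ k.+1 * w = t * v.
  apply/hII; split => //; exists (t ^+ k * w); split; last by rewrite exprS mulrA.
  by apply: srM => //; exact: srX.
have -> : t ^+ k * w = v by apply: (mulfI t0); rewrite -e exprS mulrA.
exact: Vv.
Qed.

Lemma VcapT (F : fieldType) (R : realType) (T R0 V : set F) t (alpha : R) abs :
  absP R0 t alpha abs -> VP T R0 V t ->
  forall k z, V z -> tpowM t k R0 z -> tpowM t k V z.
Proof.
move=> h hv k z Vz [y [Ry e]]; exists y; split => //.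
by apply: (Ddiv h hv (k:=k) Ry); rewrite -e.
Qed.

Lemma Vsub (F : fieldType) (T V : set F) x y : subring T -> submodule T V ->
  V x -> V y -> V (x - y).
Proof.
move=> sT [V0 VD VM] Vx Vy; apply: VD => //.
rewrite -mulN1r; apply: VM => //; exact: (srN sT (sr1 sT)).
Qed.

Lemma invt_of (F : fieldType) (V : set F) t x : V x -> inv_t t V x.
Proof. by move=> Vx; exists 0%N; rewrite expr0 mul1r. Qed.

Lemma invt_M (F : fieldType) (T V : set F) t c x : submodule T V -> T c ->
  inv_t t V x -> inv_t t V (c * x).
Proof.
move=> [_ _ VM] Tc [n Vn]; exists n.
by rewrite mulrCA; apply: VM.
Qed.

Lemma invt_tk (F : fieldType) (T V : set F) t k x : subring T -> T t -> submodule T V ->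
  inv_t t V x -> inv_t t V (t ^+ k * x).
Proof. by move=> sT Tt sV; apply: invt_M sV _; exact: srX. Qed.

Lemma invt_D (F : fieldType) (T V : set F) t x y : subring T -> T t -> submodule T V ->
  inv_t t V x -> inv_t t V y -> inv_t t V (x + y).
Proof.
move=> sT Tt sV [n Vn] [m Vm]; exists (n + m)%N.
have -> : t ^+ (n + m) * (x + y) = t ^+ m * (t ^+ n * x) + t ^+ n * (t ^+ m * y).
  by rewrite exprD; ring.
case: (sV) => _ VD VM; apply: VD; apply: VM => //; exact: srX.
Qed.

Lemma invt_B (F : fieldType) (T V : set F) t x y : subring T -> T t -> submodule T V ->
  inv_t t V x -> inv_t t V y -> inv_t t V (x - y).
Proof.
move=> sT Tt sV hx hy; apply: (invt_D sT Tt sV) => //.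
rewrite -mulN1r; apply: invt_M sV _ hy; exact: (srN sT (sr1 sT)).
Qed.

Lemma part3 (F : fieldType) (R : realType) (T R0 V : set F) t (alpha : R) abs :
  absP R0 t alpha abs -> VP T R0 V t ->
  forall x, V x <-> (inv_t t V x /\ abs x <= 1).
Proof.
move=> h hv x; split.
  move=> Vx; split; first exact: invt_of.
  case: hv => _ _ _ VR _; exact/(abs_le1 h)/VR.
move=> [[n Vn] ax]; apply: (Ddiv h hv) Vn; exact/(abs_le1 h).
Qed.

Lemma bern (R : realType) (a : R) k : 1 <= a -> 1 + k%:R * (a - 1) <= a ^+ k.
Proof.
move=> a1; elim: k => [|k IH]; first by rewrite expr0 mul0r addr0.
rewrite exprS -addn1 natrD.
have k0 : 0 <= k%:R :> R by [].
have h1 : a * (1 + k%:R * (a - 1)) <= a * a ^+ k by rewrite ler_wpM2l //; lra.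
have h2 : 0 <= k%:R * ((a - 1) * (a - 1)) by apply: mulr_ge0 => //; nra.
nra.
Qed.

Lemma archi_alpha (R : realType) (a e : R) : 1 < a -> 0 < e ->
  exists k : nat, a ^ (- k%:Z) < e.
Proof.
move=> a1 e0; set c := (e * (a - 1))^-1.
have ea0 : 0 < e * (a - 1) by apply: mulr_gt0 => //; lra.
have c0 : 0 <= c by rewrite /c invr_ge0 ltW.
have hc : c * (e * (a - 1)) = 1 by rewrite /c mulVf // gt_eqF.
exists (Num.bound c); have hb := archi_boundP c0.
have hB := bern (Num.bound c) (ltW a1).
rewrite -exprnN.
set k := Num.bound c in hb hB *.
have p0 : 0 < a ^+ k by apply: exprn_gt0; lra.
rewrite -(ltr_pM2r p0) mulVf ?gt_eqF //.
have : 0 < e * (a - 1) * (k%:R - c) by apply: mulr_gt0 => //; lra.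
nra.
Qed.

Lemma part1 (F : fieldType) (R : realType) (T R0 V : set F) t (alpha : R) abs :
  absP R0 t alpha abs -> VP T R0 V t -> tadic_complete t R0 ->
  closed_in abs R0 V.
Proof.
move=> h hv [sepR _] x Rx happ.
case: (h) => dv fr a1 a0 H; case: (dv) => sR Rt t0 _ _.
case: (hv) => sT Tt sV VR [[_ cV] _].
have [f hf] : exists f : nat -> F, forall m, V (f m) /\ abs (x - f m) < alpha ^ (- m%:Z).
  have [g hg] := choice (P := fun (m : nat) y => V y /\ abs (x - y) < alpha ^ (- m%:Z))
    (fun m => happ _ (exprz_gt0 (- m%:Z) (lt_trans ltr01 a1))).
  by exists g.
have hf1 : forall m : nat, abs (x - f m) <= alpha ^ (- (m.+1)%:Z).
  move=> m; have := abs_disc h (hf m).2.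
  have e : m%:Z + 1 = m.+1%:Z by lia.
  by rewrite e.
have hd : forall m, tpowM t m.+1 V (f m.+1 - f m).
  move=> m; apply: (VcapT h hv); first exact: (Vsub sT sV (hf m.+1).1 (hf m).1).
  apply/(tpow_abs h).
  have -> : f m.+1 - f m = (x - f m) + - (x - f m.+1) by ring.
  apply: (abs_ultra h); rewrite ?(absN h) //.
  apply: le_trans (hf1 m.+1) _; rewrite ler_eXz2l //; lia.
have [v [Vv hv']] := cV f (fun m => (hf m).1) hd.
have e : x - v = 0.
  apply: sepR; first by apply: srB => //; exact: VR.
  move=> m; apply/(tpow_abs h).
  have -> : x - v = (x - f m) + - (v - f m) by ring.
  apply: (abs_ultra h); first exact: hf1.
  rewrite (absN h); apply/(tpow_abs h).
  have [y [Vy ->]] := hv' m; exists y; split => //; exact: VR.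
by move/eqP: e; rewrite subr_eq0 => /eqP ->.
Qed.

Lemma part2 (F : fieldType) (R : realType) (T R0 V : set F) t (alpha : R) abs :
  absP R0 t alpha abs -> VP T R0 V t ->
  forall v, inv_t t V v -> v != 0 ->
  abs v = inf [set alpha ^ n | n in [set n : int | V (t ^ n * v)]].
Proof.
move=> h hv v [N VN] v0.
case: (h) => dv fr a1 a0 H; case: (dv) => sR Rt t0 _ Hd.
case: (hv) => sT Tt sV VR _.
have al0 : alpha != 0 by rewrite gt_eqF //; lra.
have ainv : forall n : int, alpha ^ n * alpha ^ (- n) = 1.
  by move=> n; rewrite -expfzDr // subrr expr0z.
have y0 : t ^+ N * v != 0 by rewrite mulf_neq0 // expf_neq0.
have [k [u [Uu e]]] := Hd _ (VR _ VN) y0.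
have Vu : V u.
  apply: (Ddiv h hv (k:=k)); first by case: Uu.
  by rewrite -e.
set m : int := N%:Z - k%:Z.
have um : u = t ^ m * v.
  rewrite /m expfzDr // -exprnN.
  change (t ^ (N%:Z)) with (t ^+ N).
  have tk0 : t ^+ k != 0 by rewrite expf_neq0.
  apply: (mulfI tk0); rewrite -e; field.
  by rewrite tk0.
have au : abs u = 1.
  by rewrite -[u]mul1r -(expr0z t) H // oppr0 expr0z.
have av : abs v = alpha ^ m.
  move: au; rewrite um (absM h) (abs_tz h) => au.
  by rewrite -[abs v]mul1r -(ainv m) -mulrA au mulr1.
have lb : forall n : int, V (t ^ n * v) -> abs v <= alpha ^ n.
  move=> n Vn; have := (abs_le1 h _).1 (VR _ Vn).
  rewrite (absM h) (abs_tz h) => hn.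
  rewrite -[abs v]mul1r -(ainv n) -mulrA.
  rewrite ler_piMr //; apply: exprz_ge0; lra.
apply/le_anti/andP; split.
  apply: lb_le_inf; first by exists (alpha ^ m); exists m => //=; rewrite -um.
  by move=> y [n Vn <-]; exact: lb.
have hl : has_lbound [set alpha ^ n | n in [set n : int | V (t ^ n * v)]].
  by exists (abs v) => y [n Vn <-]; exact: lb.
by rewrite av; apply: (ge_inf hl); exists m => //=; rewrite -um.
Qed.

Lemma part3oc (F : fieldType) (R : realType) (T R0 V : set F) t (alpha : R) abs :
  absP R0 t alpha abs -> VP T R0 V t ->
  open_in abs (inv_t t V) V /\ closed_in abs (inv_t t V) V.
Proof.
move=> h hv; case: (hv) => sT Tt sV VR _; case: (sV) => V0 VD VM.
split.
  move=> x Vx; exists 1 => [//|y Ey hy].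
  have Vyx : V (y - x).
    apply/(part3 h hv); split; last exact: ltW.
    by apply: (invt_B sT Tt sV) => //; exact: invt_of.
  by have := VD _ _ Vyx Vx; rewrite subrK.
move=> x Ex happ; have [y [Vy hy]] := happ 1 ltr01.
have Vxy : V (x - y).
  apply/(part3 h hv); split; last exact: ltW.
  by apply: (invt_B sT Tt sV) => //; exact: invt_of.
by have := VD _ _ Vxy Vy; rewrite subrK.
Qed.

Lemma part4a (F : fieldType) (R : realType) (T R0 V : set F) t (alpha : R) abs :
  absP R0 t alpha abs -> VP T R0 V t -> tadic_complete t R0 ->
  closed_in abs setT (inv_t t V).
Proof.
move=> h hv cR x _ happ.
case: (h) => dv fr a1 a0 H; case: (dv) => sR Rt t0 _ Hd.
case: (hv) => sT Tt sV VR _; case: (sV) => V0 VD VM.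
have [->|x0] := eqVneq x 0; first exact: invt_of.
have [n [u [Uu xE]]] := rep dv fr x0.
set N := `|n|%N.
have aN1 : abs (t ^+ N) <= 1.
  rewrite -[t ^+ N]/(t ^ (N%:Z)) (abs_tz h) -(expr0z alpha) ler_eXz2l //; lia.
have aN0 : 0 <= abs (t ^+ N) by exact: (abs_ge0 h).
have az : abs (t ^+ N * x) <= 1.
  rewrite xE mulrA -[t ^+ N]/(t ^ (N%:Z)) -expfzDr // H // -(expr0z alpha) ler_eXz2l //; lia.
have Vz : V (t ^+ N * x).
  apply: (part1 h hv cR); first exact/(abs_le1 h).
  move=> e e0.
  have e10 : 0 < Num.min e 1 by rewrite lt_min e0 ltr01.
  have [y [Ey hy]] := happ _ e10.
  have hd : abs (t ^+ N * x - t ^+ N * y) < Num.min e 1.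
    rewrite -mulrBr (absM h); apply: le_lt_trans hy.
    by rewrite ler_piMl // (abs_ge0 h).
  move: (hd); rewrite lt_min => /andP [hde hd1].
  exists (t ^+ N * y); split => //.
  apply/(part3 h hv); split. 1: exact: (invt_tk N sT Tt sV Ey).
  have -> : t ^+ N * y = t ^+ N * x + - (t ^+ N * x - t ^+ N * y) by ring.
  apply: (abs_ultra h) => //; rewrite (absN h); exact: ltW.
by exists N.
Qed.

Lemma phi_ge (g : nat -> nat) m i : (i <= m)%N -> (g i <= \sum_(j < m.+1) g j)%N.
Proof.
elim: m => [|m IH] him.
  by move: him; rewrite leqn0 => /eqP ->; rewrite big_ord_recr big_ord0.
rewrite big_ord_recr /=.
move: him; rewrite leq_eqVlt => /orP [/eqP ->|him]; first exact: leq_addl.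
by apply: leq_trans (IH him) _; exact: leq_addr.
Qed.

Lemma phi_mono (g : nat -> nat) m : (\sum_(j < m.+1) g j <= \sum_(j < m.+2) g j)%N.
Proof. by rewrite [X in (_ <= X)%N]big_ord_recr /= leq_addr. Qed.

Lemma part4b (F : fieldType) (R : realType) (T R0 V : set F) t (alpha : R) abs :
  absP R0 t alpha abs -> VP T R0 V t -> dvr_unif T t ->
  banach_space abs (frac_of T) (inv_t t V).
Proof.
move=> h hv dT.
case: (h) => dv fr a1 a0 H; case: (dv) => sR Rt t0 _ Hd.
case: (hv) => sT Tt sV VR [[_ cV] _]; case: (sV) => V0 VD VM.
have al0 : alpha != 0 by rewrite gt_eqF //; lra.
split.
- split; first exact: invt_of.
    by move=> x y; exact: (invt_D sT Tt sV).
  move=> c x [a [b [Ta Tb b0 ->]]] [n Vn].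
  case: dT => _ _ _ _ HdT.
  have [j [w [[Tw w0 Twi] bE]]] := HdT b Tb b0.
  exists (n + j)%N.
  have -> : t ^+ (n + j) * (a / b * x) = a * w^-1 * (t ^+ n * x).
    rewrite bE exprD; field.
    by rewrite w0 expf_neq0.
  by apply: VM => //; apply: srM.
- move=> x _; split; first exact: (abs_ge0 h).
  move=> ax; apply/eqP; apply: contraT => x0.
  by have := abs_pos h x0; rewrite ax ltxx.
- move=> x y _ _; apply: (abs_ultra h).
    by rewrite lerDl (abs_ge0 h).
  by rewrite lerDr (abs_ge0 h).
- by move=> c x _ _; exact: (absM h).
move=> u Eu cu.
have apos : forall m : int, 0 < alpha ^ m by move=> m; apply: exprz_gt0; lra.
have [g hg] : exists g : nat -> nat, forall m p q, (g m <= p)%N -> (g m <= q)%N ->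
    abs (u p - u q) < alpha ^ (- m%:Z).
  have [g hg] := choice (P := fun (m : nat) N => forall p q, (N <= p)%N -> (N <= q)%N ->
    abs (u p - u q) < alpha ^ (- m%:Z)) (fun m => cu _ (apos _)).
  by exists g.
pose phi m := (\sum_(j < m.+1) g j)%N.
have [M VM0] := Eu (g 0%N).
have VMp : forall p, (g 0%N <= p)%N -> V (t ^+ M * u p).
  move=> p hp; apply/(part3 h hv); split; first exact: (invt_tk M sT Tt sV (Eu p)).
  have -> : t ^+ M * u p = t ^+ M * u (g 0%N) + t ^+ M * (u p - u (g 0%N)) by ring.
  apply: (abs_ultra h); first exact/(abs_le1 h)/VR.
  rewrite (absM h) -[t ^+ M]/(t ^ (M%:Z)) (abs_tz h).
  have := hg 0%N p (g 0%N) hp (leqnn _); rewrite oppr0 expr0z => hl.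
  apply: le_trans (ltW hl); rewrite ler_piMl ?(abs_ge0 h) //.
  by rewrite -(expr0z alpha) ler_eXz2l //; lia.
pose xs m := t ^+ M * u (phi m).
have Vxs : forall m, V (xs m).
  by move=> m; apply: VMp; apply: (phi_ge g (leq0n m)).
have aM : abs (t ^+ M) = alpha ^ (- M%:Z) by rewrite -(abs_tz h).
have aM1 : abs (t ^+ M) <= 1 by rewrite aM -(expr0z alpha) ler_eXz2l //; lia.
have hd : forall m, tpowM t m.+1 V (xs m.+1 - xs m).
  move=> m; apply: (VcapT h hv); first exact: (Vsub sT sV (Vxs _) (Vxs _)).
  apply/(tpow_abs h).
  have -> : (m.+1)%:Z = m%:Z + 1 by lia.
  apply: (abs_disc h).
  rewrite /xs -mulrBr (absM h).
  have hl := hg m (phi m.+1) (phi m) (phi_ge g (leqW (leqnn m))) (phi_ge g (leqnn m)).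
  apply: le_lt_trans hl; rewrite ler_piMl ?(abs_ge0 h) //.
have [l' [Vl' hl']] := cV xs Vxs hd.
have tM0 : t ^+ M != 0 by rewrite expf_neq0.
exists (l' / t ^+ M).
  by exists M; rewrite mulrC divfK.
move=> e e0.
have [k hk] := archi_alpha a1 e0.
exists (phi (k + M)%N) => n hn.
set m := (k + M)%N in hn *.
have ak : alpha ^ (- (k%:Z + 1)) <= alpha ^ (- k%:Z) by rewrite ler_eXz2l //; lia.
have ak' : alpha ^ (- m%:Z) <= alpha ^ (- k%:Z) by rewrite ler_eXz2l //; lia.
have -> : u n - l' / t ^+ M = (u n - u (phi m)) + (u (phi m) - l' / t ^+ M) by ring.
apply: (abs_ultra_lt h).
  have hh := hg m _ _ (leq_trans (phi_ge g (leqnn m)) hn) (phi_ge g (leqnn m)).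
  exact: (lt_le_trans hh (ltW (le_lt_trans ak' hk))).
apply: (le_lt_trans _ (le_lt_trans ak hk)).
have hxl : abs (l' - xs m) <= alpha ^ (- (m.+1)%:Z).
  apply/(tpow_abs h); have [y [Vy ->]] := hl' m.
  by exists y; split => //; exact: VR.
have e1 : u (phi m) - l' / t ^+ M = - (t ^ (- M%:Z) * (l' - xs m)).
  rewrite /xs -exprnN; field; exact: tM0.
rewrite e1 (absN h) (absM h) (abs_tz h).
have e2 : alpha ^ (- (k%:Z + 1)) = alpha ^ (- - M%:Z) * alpha ^ (- (m.+1)%:Z).
  rewrite -expfzDr //; congr (alpha ^ _); rewrite /m; lia.
rewrite e2 ler_pM2l //.
Qed.

Theorem lemma3p1 (F0 : fieldType) (R : realType)
  (T R0 F1 F2 V W : set F0) (t : F0) (alpha : R) (abs : F0 -> R) :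
  cdvr_unif T t ->
  cdvr_unif R0 t ->
  T `<=` R0 ->
  (forall x, frac_of R0 x) ->
  1 < alpha ->
  abs 0 = 0 ->
  (forall (n : int) (u : F0), unit_in R0 u -> abs (t ^ n * u) = alpha ^ (- n)) ->
  subfield F1 -> subfield F2 -> T `<=` F1 -> T `<=` F2 ->
  V `<=` F1 `&` R0 -> W `<=` F2 `&` R0 ->
  submodule T V -> submodule T W ->
  tadic_complete t V -> tadic_complete t W ->
  (forall r, R0 r -> exists v w, [/\ V v, W w & r = v + w]) ->
  (forall x, (V x /\ exists r, R0 r /\ x = t * r) <-> exists v, V v /\ x = t * v) ->
  (forall x, (W x /\ exists r, R0 r /\ x = t * r) <-> exists w, W w /\ x = t * w) ->
  [/\ closed_in abs R0 V,
      (forall v, inv_t t V v -> v != 0 ->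
         abs v = inf [set alpha ^ n | n in [set n : int | V (t ^ n * v)]]),
      (forall x, V x <-> (inv_t t V x /\ abs x <= 1)),
      open_in abs (inv_t t V) V /\ closed_in abs (inv_t t V) V &
      closed_in abs setT (inv_t t V) /\ banach_space abs (frac_of T) (inv_t t V)].
Proof.
move=> [dT _] [dR cR] _ fr a1 a0 Habs _ _ _ _ VF _ sV _ cV _ _ IIV _.
have h : absP R0 t alpha abs by split.
have hv : VP T R0 V t.
  case: (dT) => sT Tt _ _ _.
  by split => // x /VF [].
split.
- exact: (part1 h hv cR).
- exact: (part2 h hv).
- exact: (part3 h hv).
- exact: (part3oc h hv).
- split; [exact: (part4a h hv cR) | exact: (part4b h hv dT)].
Qed.
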